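(* There exist constants $C>0$ and $n_0$ such that for every $n\ge n_0$ and every assignment $x:V\to\{-1,1\}$ with $x_{-\mathbf v}=-x_{\mathbf v}$ for all $\mathbf v\in V$, the total weight of clauses of $\Phi_n$ satisfied by $x$ is at most $\frac{3(\sqrt{21}-4)}{2}+\frac{C}{n}$.
   Context: Let $\mathbf e_1,\dots,\mathbf e_n$ be the standard basis of $\mathbb R^n$ and $V=\{\frac{1}{\sqrt3}(b_1\mathbf e_i+b_2\mathbf e_j+b_3\mathbf e_k): b_1,b_2,b_3\in\{-1,1\},\ 1\le i<j<k\le n\}$. To each $\mathbf v\in V$ associate a Boolean variable $x_{\mathbf v}\in\{-1,1\}$, with the identification $x_{-\mathbf v}=-x_{\mathbf v}$. $\mathrm{NAE}(y_1,\dots,y_k)$ is satisfied iff not all $y_i$ are equal. $\mathcal C_3$ is the set of clauses $\mathrm{NAE}(x_{\mathbf v_1},x_{\mathbf v_2},x_{\mathbf v_3})$ with $\mathbf v_1=\frac{1}{\sqrt3}(s_1\mathbf e_{i_1}-s_2\mathbf e_{i_2}+s_4\mathbf e_{i_4})$, $\mathbf v_2=\frac{1}{\sqrt3}(s_2\mathbf e_{i_2}-s_3\mathbf e_{i_3}+s_5\mathbf e_{i_5})$, $\mathbf v_3=\frac{1}{\sqrt3}(s_3\mathbf e_{i_3}-s_1\mathbf e_{i_1}+s_6\mathbf e_{i_6})$ for distinct indices $i_1,\dots,i_6\in[n]$ and signs $s_1,\dots,s_6\in\{-1,1\}$. $\mathcal C_5$ is the set of clauses $\mathrm{NAE}(x_{\mathbf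 v_1},\dots,x_{\mathbf v_5})$ with $\mathbf v_j=\frac{1}{\sqrt3}(s_1\mathbf e_{i_1}+s_{2j}\mathbf e_{i_{2j}}+s_{2j+1}\mathbf e_{i_{2j+1}})$ for $j\in\{1,2,3,4\}$ and $\mathbf v_5=\frac{1}{\sqrt3}(s_{10}\mathbf e_{i_{10}}+s_{11}\mathbf e_{i_{11}}+s_{12}\mathbf e_{i_{12}})$ for distinct indices $i_1,\dots,i_{12}\in[n]$ and signs $s_1,\dots,s_{12}\in\{-1,1\}$. $\Phi_n$ is the MAX NAE-SAT instance on variables $\{x_{\mathbf v}\}$ with clause set $\mathcal C_3\cup\mathcal C_5$, where each clause of $\mathcal C_3$ has weight $\frac{1-3/\sqrt{21}}{|\mathcal C_3|}$ and each clause of $\mathcal C_5$ has weight $\frac{3}{\sqrt{21}\,|\mathcal C_5|}$ (total weight $1$). *)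

(* Defs.v *)
From HB Require Import structures.
From mathcomp Require Import all_boot all_order all_algebra.
From mathcomp Require Import reals.
Set Implicit Arguments. Unset Strict Implicit. Unset Printing Implicit Defensive.
Import Order.TTheory GRing.Theory Num.Theory.
Local Open Scope ring_scope.

(* A vector (1/sqrt 3)(b1 e_i + b2 e_j + b3 e_k) of V is encoded by its
   integer coefficient vector b1 e_i + b2 e_j + b3 e_k (the common factor
   1/sqrt 3 is dropped; this encoding is injective). *)
Definition vec (n : nat) := {ffun 'I_n -> int}.

Definition inV (n : nat) (v : vec n) : bool :=
  (#|[set i | v i != 0]| == 3)%N && [forall i, (v i == 0) || (v i == 1) || (v i == -1)].

Definition negv (n : nat) (v : vec n) : vec n := [ffun t => - v t].

Definition mkv3 (n : nat) (i j k : 'I_n) (a b c : int) : vec n :=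
  [ffun t => (if t == i then a else 0) + (if t == j then b else 0)
            + (if t == k then c else 0)].

Definition sg (b : bool) : int := if b then 1 else -1.

(* an assignment: x v = true means x_v = 1, false means x_v = -1 *)
Definition assignment (n : nat) := vec n -> bool.

Definition nae (s : seq bool) : bool := ~~ constant s.


Definition params (n k : nat) := ({ffun 'I_k -> 'I_n} * {ffun 'I_k -> bool})%type.

Definition C3 (n : nat) : {set params n 6} := [set p : params n 6 | injectiveb p.1].
Definition C5 (n : nat) : {set params n 12} := [set p : params n 12 | injectiveb p.1].

(* 0-based: index a (1-based) is stored at position a-1 *)
Definition clause3 (n : nat) (p : params n 6) : seq (vec n) :=
  let i (a : nat) := p.1 (inord a.-1) in
  let s (a : nat) := sg (p.2 (inord a.-1)) in
  [:: mkv3 (i 1) (i 2) (i 4) (s 1) (- s 2) (s 4);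
      mkv3 (i 2) (i 3) (i 5) (s 2) (- s 3) (s 5);
      mkv3 (i 3) (i 1) (i 6) (s 3) (- s 1) (s 6)].

Definition clause5 (n : nat) (p : params n 12) : seq (vec n) :=
  let i (a : nat) := p.1 (inord a.-1) in
  let s (a : nat) := sg (p.2 (inord a.-1)) in
  [seq mkv3 (i 1) (i (2 * j)) (i (2 * j + 1)) (s 1) (s (2 * j)) (s (2 * j + 1))
      | j <- [:: 1; 2; 3; 4]%N] ++
  [:: mkv3 (i 10) (i 11) (i 12) (s 10) (s 11) (s 12)].

Definition satisfied (n : nat) (x : assignment n) (c : seq (vec n)) : bool :=
  nae [seq x v | v <- c].

Definition w3 {R : realType} : R := 1 - 3 / Num.sqrt 21.
Definition w5 {R : realType} : R := 3 / Num.sqrt 21.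

Definition satWeight (R : realType) (n : nat) (x : assignment n) : R :=
  \sum_(p in C3 n | satisfied x (clause3 p)) (w3 / #|C3 n|%:R)
  + \sum_(p in C5 n | satisfied x (clause5 p)) (w5 / #|C5 n|%:R).

(* Main.v *)
Require Import Defs.
From HB Require Import structures.
From mathcomp Require Import all_boot all_order all_algebra.
From mathcomp Require Import reals.
From mathcomp Require Import ring lra zify.
Import Order.TTheory GRing.Theory Num.Theory.
Local Open Scope ring_scope.

Set Implicit Arguments. Unset Strict Implicit. Unset Printing Implicit Defensive.

Definition joinf (T : Type) m l (q : {ffun 'I_m -> T}) (r : {ffun 'I_l -> T}) : {ffun 'I_(m+l) -> T} :=
  [ffun i => match split i with inl j => q j | inr j => r j end].
Definition lpart (T : Type) m l (f : {ffun 'I_(m+l) -> T}) : {ffun 'I_m -> T} := [ffun j => f (lshift l j)].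
Definition rpart (T : Type) m l (f : {ffun 'I_(m+l) -> T}) : {ffun 'I_l -> T} := [ffun j => f (rshift m j)].

Lemma split_lshift m l (j : 'I_m) : split (lshift l j) = inl j.
Proof. exact: (unsplitK (inl _ j)). Qed.
Lemma split_rshift m l (j : 'I_l) : split (rshift m j) = inr j.
Proof. exact: (unsplitK (inr _ j)). Qed.

Lemma joinf_lshift (T : Type) m l (q : {ffun 'I_m -> T}) (r : {ffun 'I_l -> T}) j :
  joinf q r (lshift l j) = q j.
Proof. by rewrite ffunE split_lshift. Qed.
Lemma joinf_rshift (T : Type) m l (q : {ffun 'I_m -> T}) (r : {ffun 'I_l -> T}) j :
  joinf q r (rshift m j) = r j.
Proof. by rewrite ffunE split_rshift. Qed.
Lemma lpart_join (T : Type) m l (q : {ffun 'I_m -> T}) (r : {ffun 'I_l -> T}) :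
  lpart (joinf q r) = q.
Proof. by apply/ffunP => j; rewrite ffunE joinf_lshift. Qed.
Lemma rpart_join (T : Type) m l (q : {ffun 'I_m -> T}) (r : {ffun 'I_l -> T}) :
  rpart (joinf q r) = r.
Proof. by apply/ffunP => j; rewrite ffunE joinf_rshift. Qed.
Lemma join_parts (T : Type) m l (f : {ffun 'I_(m+l) -> T}) : joinf (lpart f) (rpart f) = f.
Proof. by apply/ffunP=> i; rewrite !ffunE; case: split_ordP => j ->; rewrite ffunE. Qed.

Lemma joinf_inordL (T : Type) m' l (q : {ffun 'I_m'.+1 -> T}) (r : {ffun 'I_l -> T}) a :
  (a <= m')%N -> joinf q r (inord a) = q (inord a).
Proof.
move=> ha; have -> : (inord a : 'I_(m'.+1 + l)) = lshift l (inord a).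
  by apply: val_inj; rewrite /= !inordK // ltnS (leq_trans ha) // leq_addr.
exact: joinf_lshift.
Qed.
Lemma joinf_inordR (T : Type) m' l' (q : {ffun 'I_m'.+1 -> T}) (r : {ffun 'I_l'.+1 -> T}) a :
  (m'.+1 <= a)%N -> (a <= m'.+1 + l')%N -> joinf q r (inord a) = r (inord (a - m'.+1)).
Proof.
move=> h1 h2; have -> : (inord a : 'I_(m'.+1 + l'.+1)) = rshift m'.+1 (inord (a - m'.+1)).
  have ha : (a < (m' + l'.+1).+1)%N by lia.
  have hb : (a - m'.+1 < l'.+1)%N by lia.
  by apply: val_inj; rewrite /= !inordK //; lia.
exact: joinf_rshift.
Qed.
Lemma lpart_inord (T : Type) m' l (f : {ffun 'I_(m'.+1 + l) -> T}) a :
  (a <= m')%N -> lpart f (inord a) = f (inord a).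
Proof.
move=> ha; rewrite ffunE; congr (f _); apply: val_inj.
by rewrite /= !inordK // ltnS (leq_trans ha) // leq_addr.
Qed.

Lemma inj_joinf n m l (q : {ffun 'I_m -> 'I_n}) (r : {ffun 'I_l -> 'I_n}) :
  injectiveb (joinf q r) = [&& injectiveb q, injectiveb r & [forall i, forall j, q i != r j]].
Proof.
apply/idP/idP.
- move/injectiveP => h; apply/and3P; split.
  + apply/injectiveP => i j e; apply: (@lshift_inj m l); apply: h.
    by rewrite !joinf_lshift.
  + apply/injectiveP => i j e; apply: (@rshift_inj m l); apply: h.
    by rewrite !joinf_rshift.
  + apply/forallP => i; apply/forallP => j; apply/negP => /eqP e.
    have := h (lshift l i) (rshift m j); rewrite joinf_lshift joinf_rshift => /(_ e) /eqP.
    by rewrite eq_lrshift.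
- case/and3P => /injectiveP hq /injectiveP hr /forallP hd; apply/injectiveP => i j.
  case: (split_ordP i) => i' ->; case: (split_ordP j) => j' ->;
    rewrite ?joinf_lshift ?joinf_rshift.
  + by move/hq ->.
  + by move=> e; have /forallP /(_ j') := hd i'; rewrite e eqxx.
  + by move=> e; have /forallP /(_ i') := hd j'; rewrite e eqxx.
  + by move/hr ->.
Qed.

Lemma card_ext n m l (q : {ffun 'I_m -> 'I_n}) : injectiveb q ->
  #|[pred r : {ffun 'I_l -> 'I_n} | injectiveb (joinf q r)]| = ((n - m) ^_ l)%N.
Proof.
move=> iq.
have hc : #|[pred t : 'I_n | t \notin codom q]| = (n - m)%N.
  rewrite -[in RHS](card_ord n) -(cardC (mem (codom q))) card_codom ?card_ord; last exact/injectiveP.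
  by rewrite addKn; apply: eq_card => t; rewrite !inE.
rewrite -hc -[X in (_ ^_ X)%N](card_ord l) -card_inj_ffuns_on; apply: eq_card => r; rewrite !inE inj_joinf iq /= andbC.
congr (_ && _); apply/forallP/ffun_onP => [h j | h i].
- rewrite inE; apply/codomP => -[i e].
  by have /forallP /(_ j) := h i; rewrite e eqxx.
- apply/forallP => j; apply/eqP => e; have := h j.
  by rewrite inE -e codom_f.
Qed.

Definition joinp n m l (q : params n m) (r : params n l) : params n (m+l) :=
  (joinf q.1 r.1, joinf q.2 r.2).
Definition lpp n m l (p : params n (m+l)) : params n m := (lpart p.1, lpart p.2).
Definition rpp n m l (p : params n (m+l)) : params n l := (rpart p.1, rpart p.2).

Lemma sum_joinp (R : realType) n m l (F : params n (m+l) -> R) :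
  \sum_(p : params n (m+l)) F p = \sum_(q : params n m) \sum_(r : params n l) F (joinp q r).
Proof.
rewrite pair_bigA /= (reindex (fun qr : params n m * params n l => joinp qr.1 qr.2)) //=.
exists (fun p => (lpp p, rpp p)) => [[q r] _ | p _] /=.
  by rewrite /lpp /rpp /joinp /= !lpart_join !rpart_join; case: q; case: r.
by rewrite /lpp /rpp /joinp /= !join_parts; case: p.
Qed.

Lemma sum_params_const (R : realType) n k (P : pred {ffun 'I_k -> 'I_n}) (c : R) :
  \sum_(p : params n k | P p.1) c = c *+ (#|P| * 2 ^ k)%N.
Proof.
rewrite sumr_const; congr (_ *+ _).
rewrite (eq_card (B := setX [set f | P f] [set: {ffun 'I_k -> bool}])); last first.
  by case=> a b; rewrite !inE andbT.
by rewrite cardsX cardsT card_ffun card_bool card_ord; congr (_ * _)%N; apply: eq_card => f; rewrite inE.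
Qed.

Lemma marg (R : realType) n m l (G : params n m -> R) :
  \sum_(p : params n (m+l) | injectiveb p.1) G (lpp p) =
  ((n - m) ^_ l * 2 ^ l)%:R * \sum_(q : params n m | injectiveb q.1) G q.
Proof.
rewrite big_mkcond /= sum_joinp mulr_sumr [in RHS]big_mkcond /=; apply: eq_bigr => q _.
have E r : lpp (joinp q r) = q by rewrite /lpp /joinp /= !lpart_join; case: q.
under eq_bigr do rewrite E.
case iq: (injectiveb q.1); last first.
  by apply: big1 => r _; rewrite /= inj_joinf iq.
rewrite -big_mkcond /=.
rewrite (sum_params_const (fun f => injectiveb (joinf q.1 f))) (card_ext l iq).
by rewrite mulr_natl.
Qed.

Lemma sum_inj1 (R : realType) n k :
  \sum_(q : params n k | injectiveb q.1) (1:R) = (n ^_ k * 2 ^ k)%:R.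
Proof.
rewrite (sum_params_const (fun f : {ffun 'I_k -> 'I_n} => injectiveb f)).
have -> : #|(fun f : {ffun 'I_k -> 'I_n} => injectiveb f)| = (n ^_ k)%N.
  by have := card_inj_ffuns 'I_k 'I_n; rewrite !card_ord => <-; apply: eq_card => f; rewrite inE.
by rewrite -mulr_natl mulr1.
Qed.

Definition act n k (f : 'I_k -> 'I_k) (msk : 'I_k -> bool) (p : params n k) : params n k :=
  ([ffun i => p.1 (f i)], [ffun i => p.2 (f i) (+) msk i]).

Lemma act_inj n k (f : 'I_k -> 'I_k) msk : injective f -> injective (@act n k f msk).
Proof.
move=> fi; have [g fg gf] := injF_bij fi.
move=> [p1 p2] [q1 q2] e.
have e1 : p1 = q1.
  apply/ffunP => j; have := congr1 (fun p : params n k => p.1 (g j)) e.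
  by rewrite /= !ffunE gf.
have e2 : p2 = q2.
  apply/ffunP => j; have := congr1 (fun p : params n k => p.2 (g j)) e.
  by rewrite /= !ffunE gf => /addIb.
by rewrite e1 e2.
Qed.

Lemma sum_act (R : realType) n k (f : 'I_k -> 'I_k) (msk : 'I_k -> bool) (F : params n k -> R) : injective f ->
  \sum_(p : params n k | injectiveb p.1) F p = \sum_(p : params n k | injectiveb p.1) F (act f msk p).
Proof.
move=> fi; have [g fg gf] := injF_bij fi.
rewrite (reindex_inj (@act_inj n k f msk fi)); apply: eq_bigl => p /=.
apply/injectiveP/injectiveP => h i j.
- by move=> e; apply: (can_inj gf); apply: h; rewrite !ffunE !gf.
- by rewrite !ffunE => /h /fi.
Qed.

Definition pf k (s : seq nat) : 'I_k.+1 -> 'I_k.+1 := fun i => inord (nth 0%N s i).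
Arguments pf : clear implicits.
Definition mk k (bs : seq bool) : 'I_k -> bool := fun i => nth false bs i.

Lemma pf_inj k s s' :
  all (fun m => (nth 0%N s m <= k)%N && (nth 0%N s' (nth 0%N s m) == m)) (iota 0 k.+1) ->
  injective (pf k s).
Proof.
move/allP => h; apply: (can_inj (g := pf k s')) => i; apply: val_inj.
have hi : (val i \in iota 0 k.+1) by rewrite mem_iota add0n ltn_ord.
have /andP[h1 /eqP h2] := h i hi.
rewrite /pf /= (@inordK k (nth 0%N s i)) ?ltnS // h2 inordK //.
Qed.

Lemma act_inord1 n k s bs (p : params n k.+1) a : (a <= k)%N ->
  (act (pf k s) (mk bs) p).1 (inord a) = p.1 (inord (nth 0%N s a)).
Proof. by move=> ha; rewrite ffunE /pf inordK. Qed.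
Lemma act_inord2 n k s bs (p : params n k.+1) a : (a <= k)%N ->
  (act (pf k s) (mk bs) p).2 (inord a) = p.2 (inord (nth 0%N s a)) (+) nth false bs a.
Proof. by move=> ha; rewrite ffunE /pf /mk inordK. Qed.

Definition yb (R : realType) (b : bool) : R := if b then 1 else -1.
Definition bR (R : realType) (b : bool) : R := if b then 1 else 0.
Arguments yb {R}. Arguments bR {R}.

Lemma nae3R (R : realType) b1 b2 b3 :
  bR (nae [:: b1; b2; b3]) = 1 - (1 + yb b1 * yb b2 + yb b2 * yb b3 + yb b3 * yb b1) / 4 :> R.
Proof. by case: b1; case: b2; case: b3; rewrite /bR /yb /=; field. Qed.

Lemma all5 (R : realType) b1 b2 b3 b4 b5 :
  bR (~~ nae [:: b1; b2; b3; b4; b5]) + bR (~~ nae [:: b1; b2; b3; b4; ~~ b5]) =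
  bR (~~ nae [:: b1; b2; b3; b4]) :> R.
Proof. by case: b1; case: b2; case: b3; case: b4; case: b5; rewrite /bR /= ?addr0 ?add0r. Qed.

Lemma all4R (R : realType) b1 b2 b3 b4 :
  bR (~~ nae [:: b1; b2; b3; b4]) =
  (1 + yb b1 * yb b2 + yb b1 * yb b3 + yb b1 * yb b4 + yb b2 * yb b3 + yb b2 * yb b4
     + yb b3 * yb b4 + yb b1 * yb b2 * yb b3 * yb b4) / 8 :> R.
Proof. by case: b1; case: b2; case: b3; case: b4; rewrite /bR /yb /=; field. Qed.

Definition Z n (x : assignment n) k (p : params n k.+1) (a b c : nat) : bool :=
  x (mkv3 (p.1 (inord a)) (p.1 (inord b)) (p.1 (inord c))
          (sg (p.2 (inord a))) (sg (p.2 (inord b))) (sg (p.2 (inord c)))).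
Definition Zn n (x : assignment n) k (p : params n k.+1) (a b c : nat) : bool :=
  x (mkv3 (p.1 (inord a)) (p.1 (inord b)) (p.1 (inord c))
          (sg (p.2 (inord a))) (- sg (p.2 (inord b))) (sg (p.2 (inord c)))).

Lemma sgN b : sg (~~ b) = - sg b. Proof. by case: b. Qed.
Lemma sg_addbT b : sg (b (+) true) = - sg b. Proof. by case: b. Qed.
Lemma sg_addbF b : sg (b (+) false) = sg b. Proof. by case: b. Qed.

Lemma mkv3_neg n (i j k : 'I_n) a b c :
  mkv3 i j k (- a) (- b) (- c) = negv (mkv3 i j k a b c).
Proof.
apply/ffunP => t; rewrite !ffunE !opprD.
by congr (_ + _ + _); case: (t == _); rewrite ?oppr0.
Qed.

Lemma mkv3C n (i j k : 'I_n) a b c : mkv3 i j k a b c = mkv3 j i k b a c.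
Proof. by apply/ffunP => t; rewrite !ffunE (addrC (if t == i then _ else _)). Qed.

Lemma sg_neq0 b : sg b != 0. Proof. by case: b. Qed.

Lemma inV_mkv3 n (i j k : 'I_n) a b c : i != j -> i != k -> j != k ->
  inV (mkv3 i j k (sg a) (sg b) (sg c)).
Proof.
move=> ij ik jk; apply/andP; split.
- have -> : [set t | mkv3 i j k (sg a) (sg b) (sg c) t != 0] = i |: (j |: [set k]).
    apply/setP => t; rewrite !inE ffunE.
    case: (eqVneq t i) => [eti|ti].
      by subst t; rewrite (negbTE ij) (negbTE ik) !addr0 sg_neq0.
    case: (eqVneq t j) => [etj|tj]; first by subst t; rewrite (negbTE jk) !addr0 add0r sg_neq0.
    case: (eqVneq t k) => [etk|tk]; first by subst t; rewrite !add0r sg_neq0.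
    by rewrite !addr0 eqxx.
  by rewrite !cardsU1 cards1 !inE (negbTE ij) (negbTE ik) (negbTE jk).
- apply/forallP => t; rewrite ffunE.
  case: (eqVneq t i) => [eti|ti].
    by subst t; rewrite (negbTE ij) (negbTE ik) !addr0; case: a.
  case: (eqVneq t j) => [etj|tj]; first by subst t; rewrite (negbTE jk) !addr0 add0r; case: b.
  case: (eqVneq t k) => [etk|tk]; first by subst t; rewrite !add0r; case: c.
  by rewrite !addr0.
Qed.

Definition oddx n (x : assignment n) := forall v : vec n, inV v -> x (negv v) = ~~ x v.

Lemma x_neg n (x : assignment n) (i j k : 'I_n) a b c : oddx x ->
  i != j -> i != k -> j != k ->
  x (mkv3 i j k (- sg a) (- sg b) (- sg c)) = ~~ x (mkv3 i j k (sg a) (sg b) (sg c)).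
Proof. by move=> hx ij ik jk; rewrite mkv3_neg hx // inV_mkv3. Qed.

Lemma inj_neq n k (f : {ffun 'I_k.+1 -> 'I_n}) a b : injectiveb f ->
  (a <= k)%N -> (b <= k)%N -> a != b -> f (inord a) != f (inord b).
Proof.
move=> /injectiveP fi ha hb ab; rewrite (inj_eq fi).
by rewrite -val_eqE /= !inordK.
Qed.

Definition S5 (R : realType) n (x : assignment n) : R :=
  \sum_(q : params n 5 | injectiveb q.1) yb (Z x q 0 1 2) * yb (Z x q 0 3 4).

Lemma ybN (R : realType) b : yb (~~ b) = - yb b :> R.
Proof. by case: b; rewrite /yb ?opprK. Qed.

Lemma sum_lin3 (R : realType) (I : finType) (P : pred I) (F G H : I -> R) :
  \sum_(i | P i) (1 - (1 + F i + G i + H i) / 4) =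
  \sum_(i | P i) 1 - (\sum_(i | P i) 1 + \sum_(i | P i) F i + \sum_(i | P i) G i
     + \sum_(i | P i) H i) / 4.
Proof. by rewrite sumrB; congr (_ - _); rewrite -mulr_suml !big_split. Qed.

Lemma G3_S5 (R : realType) n (x : assignment n) : oddx x ->
  \sum_(q : params n 5 | injectiveb q.1) yb (Zn x q 0 1 3) * yb (Zn x q 1 2 4)
  = - S5 R x :> R.
Proof.
move=> hx.
have hi : injective (pf 4 [:: 1; 0; 3; 2; 4]%N) by apply: (pf_inj (s' := [:: 1; 0; 3; 2; 4]%N)).
rewrite (sum_act (mk [:: true; false; true; true; false]) _ hi) /S5 -sumrN.
apply: eq_bigr => q iq.
rewrite /Zn !act_inord1 // !act_inord2 //= !sg_addbT !sg_addbF opprK mkv3C.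
by rewrite x_neg ?inj_neq // ybN /Z mulNr.
Qed.

Lemma C3_sum (R : realType) n (x : assignment n) : oddx x ->
  \sum_(p : params n 6 | injectiveb p.1) bR (satisfied x (clause3 p)) =
  (3 * (n ^_ 6 * 2 ^ 6)%:R + 3 * ((n - 5) ^_ 1 * 2 ^ 1)%:R * S5 R x) / 4 :> R.
Proof.
move=> hx.
have E p : satisfied x (clause3 p) = nae [:: Zn x p 0 1 3; Zn x p 1 2 4; Zn x p 2 0 5] by [].
under eq_bigr do rewrite E nae3R.
rewrite sum_lin3 sum_inj1.
set T := \sum_(i : params n 6 | injectiveb i.1) yb (Zn x i 0 1 3) * yb (Zn x i 1 2 4).
have h1 : injective (pf 5 [:: 1; 2; 0; 4; 5; 3]%N)
  by apply: (pf_inj (s' := [:: 2; 0; 1; 5; 3; 4]%N)).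
have h2 : injective (pf 5 [:: 2; 0; 1; 5; 3; 4]%N)
  by apply: (pf_inj (s' := [:: 1; 2; 0; 4; 5; 3]%N)).
have -> : \sum_(i : params n 6 | injectiveb i.1) yb (Zn x i 1 2 4) * yb (Zn x i 2 0 5) = T.
  symmetry; rewrite /T (sum_act (mk [::]) _ h1); apply: eq_bigr => p _.
  by rewrite /Zn !act_inord1 // !act_inord2 //= !addbF.
have -> : \sum_(i : params n 6 | injectiveb i.1) yb (Zn x i 2 0 5) * yb (Zn x i 0 1 3) = T.
  symmetry; rewrite /T (sum_act (mk [::]) _ h2); apply: eq_bigr => p _.
  by rewrite /Zn !act_inord1 // !act_inord2 //= !addbF.
have -> : T = - (((n - 5) ^_ 1 * 2 ^ 1)%:R * S5 R x).
  rewrite -mulrN -G3_S5 // -(marg 1).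
  apply: eq_bigr => p _.
  by rewrite /Zn /lpp /= !lpart_inord.
by field.
Qed.

Definition S9 (R : realType) n (x : assignment n) : R :=
  \sum_(r : params n 9 | injectiveb r.1)
     yb (Z x r 0 1 2) * yb (Z x r 0 3 4) * yb (Z x r 0 5 6) * yb (Z x r 0 7 8).

Lemma Y5_sum12 (R : realType) n (x : assignment n) :
  \sum_(p : params n 12 | injectiveb p.1) yb (Z x p 0 1 2) * yb (Z x p 0 3 4)
  = ((n - 5) ^_ 7 * 2 ^ 7)%:R * S5 R x :> R.
Proof.
rewrite /S5 -(marg 7); apply: eq_bigr => p _.
by rewrite /Z /lpp /= !lpart_inord.
Qed.

Lemma Q_sum12 (R : realType) n (x : assignment n) :
  \sum_(p : params n 12 | injectiveb p.1)
     yb (Z x p 0 1 2) * yb (Z x p 0 3 4) * yb (Z x p 0 5 6) * yb (Z x p 0 7 8)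
  = ((n - 9) ^_ 3 * 2 ^ 3)%:R * S9 R x :> R.
Proof.
rewrite /S9 -(marg 3); apply: eq_bigr => p _.
by rewrite /Z /lpp /= !lpart_inord.
Qed.

Lemma pair_sum12 (R : realType) n (x : assignment n) (s s' : seq nat) a1 a2 b1 b2 :
  all (fun m => (nth 0%N s m <= 11)%N && (nth 0%N s' (nth 0%N s m) == m)) (iota 0 12) ->
  nth 0%N s 0 = 0%N -> nth 0%N s 1 = a1 -> nth 0%N s 2 = a2 -> nth 0%N s 3 = b1 ->
  nth 0%N s 4 = b2 ->
  \sum_(p : params n 12 | injectiveb p.1) yb (Z x p 0 a1 a2) * yb (Z x p 0 b1 b2)
  = ((n - 5) ^_ 7 * 2 ^ 7)%:R * S5 R x :> R.
Proof.
move=> hs e0 e1 e2 e3 e4; rewrite -Y5_sum12 [RHS](sum_act (mk [::]) _ (pf_inj hs)).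
apply: eq_bigr => p _.
by rewrite /Z !act_inord1 // !act_inord2 // e0 e1 e2 e3 e4 /= !addbF.
Qed.

Lemma sum_lin8 (R : realType) (I : finType) (P : pred I) (F1 F2 F3 F4 F5 F6 F7 : I -> R) :
  \sum_(i | P i) ((1 + F1 i + F2 i + F3 i + F4 i + F5 i + F6 i + F7 i) / 8) =
  (\sum_(i | P i) 1 + \sum_(i | P i) F1 i + \sum_(i | P i) F2 i + \sum_(i | P i) F3 i
   + \sum_(i | P i) F4 i + \sum_(i | P i) F5 i + \sum_(i | P i) F6 i + \sum_(i | P i) F7 i) / 8.
Proof. by rewrite -mulr_suml !big_split. Qed.

Lemma C5_sum (R : realType) n (x : assignment n) : oddx x ->
  \sum_(p : params n 12 | injectiveb p.1) bR (satisfied x (clause5 p)) =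
  (n ^_ 12 * 2 ^ 12)%:R - ((n ^_ 12 * 2 ^ 12)%:R
     + 6 * (((n - 5) ^_ 7 * 2 ^ 7)%:R * S5 R x)
     + ((n - 9) ^_ 3 * 2 ^ 3)%:R * S9 R x) / 16 :> R.
Proof.
move=> hx.
pose L (p : params n 12) := [:: Z x p 0 1 2; Z x p 0 3 4; Z x p 0 5 6; Z x p 0 7 8].
have E p : satisfied x (clause5 p) = nae (L p ++ [:: Z x p 9 10 11]) by [].
have bRN b : bR (nae b) = 1 - bR (~~ nae b) :> R by case: (nae b); rewrite /bR ?subr0 ?subrr.
under eq_bigr do rewrite E bRN.
rewrite sumrB sum_inj1; congr (_ - _).
have hf : injective (pf 11 (iota 0 12))
  by apply: (pf_inj (s' := iota 0 12)).
have H : \sum_(p : params n 12 | injectiveb p.1) bR (~~ nae (L p ++ [:: Z x p 9 10 11]))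
  = \sum_(p : params n 12 | injectiveb p.1) bR (~~ nae (L p ++ [:: ~~ Z x p 9 10 11])) :> R.
  rewrite (sum_act (mk [:: false; false; false; false; false; false; false; false; false;
                             true; true; true]) _ hf).
  apply: eq_bigr => p ip.
  rewrite /L /Z !act_inord1 // !act_inord2 //= !addbF !addbT !sgN.
  by rewrite x_neg ?inj_neq.
have H2 : \sum_(p : params n 12 | injectiveb p.1) bR (~~ nae (L p ++ [:: Z x p 9 10 11]))
  = (\sum_(p : params n 12 | injectiveb p.1) bR (~~ nae (L p))) / 2 :> R.
  have h : \sum_(p : params n 12 | injectiveb p.1) bR (~~ nae (L p ++ [:: Z x p 9 10 11]))
   + \sum_(p : params n 12 | injectiveb p.1) bR (~~ nae (L p ++ [:: Z x p 9 10 11]))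
   = \sum_(p : params n 12 | injectiveb p.1) bR (~~ nae (L p)) :> R.
    rewrite {2}H -big_split /=.
    by apply: eq_bigr => p _; rewrite /L /= all5.
  by rewrite -h; field.
rewrite H2 /L.
under eq_bigr do rewrite all4R.
rewrite sum_lin8 sum_inj1.
rewrite (@pair_sum12 R n x (iota 0 12) (iota 0 12) _ _ _ _) //.
rewrite (@pair_sum12 R n x ([:: 0; 1; 2; 5; 6; 3; 4; 7; 8; 9; 10; 11]%N) ([:: 0; 1; 2; 5; 6; 3; 4; 7; 8; 9; 10; 11]%N) _ _ _ _) //.
rewrite (@pair_sum12 R n x ([:: 0; 1; 2; 7; 8; 5; 6; 3; 4; 9; 10; 11]%N) ([:: 0; 1; 2; 7; 8; 5; 6; 3; 4; 9; 10; 11]%N) _ _ _ _) //.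
rewrite (@pair_sum12 R n x ([:: 0; 3; 4; 5; 6; 1; 2; 7; 8; 9; 10; 11]%N) ([:: 0; 5; 6; 1; 2; 3; 4; 7; 8; 9; 10; 11]%N) _ _ _ _) //.
rewrite (@pair_sum12 R n x ([:: 0; 3; 4; 7; 8; 5; 6; 1; 2; 9; 10; 11]%N) ([:: 0; 7; 8; 1; 2; 5; 6; 3; 4; 9; 10; 11]%N) _ _ _ _) //.
rewrite (@pair_sum12 R n x ([:: 0; 5; 6; 7; 8; 1; 2; 3; 4; 9; 10; 11]%N) ([:: 0; 5; 6; 7; 8; 1; 2; 3; 4; 9; 10; 11]%N) _ _ _ _) //.
rewrite Q_sum12.
by field.
Qed.

Lemma cauchy_schwarz (R : realType) (I : finType) (F : I -> R) :
  (\sum_i F i) ^+ 2 <= #|I|%:R * \sum_i F i ^+ 2.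
Proof.
have h : 0 <= \sum_(i : I) \sum_(j : I) (F i - F j) ^+ 2.
  by apply: sumr_ge0 => i _; apply: sumr_ge0 => j _; exact: sqr_ge0.
have e1 : \sum_(i : I) \sum_(j : I) (F i - F j) ^+ 2 =
   \sum_(i : I) \sum_(j : I) F i ^+ 2 + \sum_(i : I) \sum_(j : I) F j ^+ 2
   - 2 * \sum_(i : I) \sum_(j : I) (F i * F j).
  rewrite mulr_sumr -big_split -sumrB /=; apply: eq_bigr => i _.
  rewrite mulr_sumr -big_split -sumrB /=; apply: eq_bigr => j _.
  by rewrite sqrrB; ring.
have e2 : \sum_(i : I) \sum_(j : I) (F i * F j) = (\sum_i F i) ^+ 2.
  by rewrite expr2 mulr_suml; apply: eq_bigr => i _; rewrite mulr_sumr.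
have e3 : \sum_(i : I) \sum_(j : I) F i ^+ 2 = #|I|%:R * \sum_i F i ^+ 2 :> R.
  by rewrite mulr_sumr; apply: eq_bigr => i _; rewrite sumr_const mulr_natl.
have e4 : \sum_(i : I) \sum_(j : I) F j ^+ 2 = #|I|%:R * \sum_i F i ^+ 2 :> R.
  by rewrite sumr_const mulr_natl.
move: h; rewrite e1 e2 e3 e4; lra.
Qed.
Lemma card_fix n k (b : 'I_k.+1) (v : 'I_n) :
  #|[pred g : {ffun 'I_k.+1 -> 'I_n} | g b == v]| = (n ^ k)%N.
Proof.
pose F := fun i : 'I_k.+1 => if i == b then pred1 v else predT.
rewrite (eq_card (B := family F)); last first.
  move=> g; rewrite !inE; apply/eqP/familyP => [e i | h].
    by rewrite /F; case: eqP => [->|]; rewrite inE ?e.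
  by have := h b; rewrite /F eqxx inE => /eqP.
rewrite card_family foldrE big_map big_enum /= (bigD1 b) //= /F eqxx card1 mul1n.
rewrite (eq_bigr (fun _ => n)); last by move=> i /negbTE ->; rewrite -[RHS](card_ord n).
by rewrite (prod_nat_const (predC1 b)) cardC1 card_ord.
Qed.

Definition Y5 (R : realType) n (x : assignment n) (q : params n 5) : R :=
  yb (Z x q 0 1 2) * yb (Z x q 0 3 4).

Definition Hc (R : realType) n (x : assignment n) (c : params n 1) : R :=
  \sum_(s : params n 4) bR (injectiveb (joinp c s).1) * Y5 R x (joinp c s).

Lemma S5_H (R : realType) n (x : assignment n) : S5 R x = \sum_(c : params n 1) Hc R x c.
Proof.
rewrite /S5 big_mkcond /=.
etransitivity.
  exact: (@sum_joinp R n 1 4 (fun q => if injectiveb q.1 then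
            yb (Z x q 0 1 2) * yb (Z x q 0 3 4) else 0)).
apply: eq_bigr => c _; apply: eq_bigr => s _.
by rewrite /bR /Y5; case: ifP; rewrite ?mul1r ?mul0r.
Qed.


Lemma S9_split (R : realType) n (x : assignment n) :
  S9 R x = \sum_(c : params n 1) \sum_(s1 : params n 4) \sum_(s2 : params n 4)
    bR (injectiveb (joinp (joinp c s1) s2).1) *
      (Y5 R x (joinp c s1) * Y5 R x (joinp c s2)).
Proof.
rewrite /S9 big_mkcond /=.
etransitivity.
  exact: (@sum_joinp R n (1+4) 4 (fun r => if injectiveb r.1 then
     yb (Z x r 0 1 2) * yb (Z x r 0 3 4) * yb (Z x r 0 5 6) * yb (Z x r 0 7 8) else 0)).
rewrite (@sum_joinp R n 1 4).
apply: eq_bigr => c _; apply: eq_bigr => s1 _; apply: eq_bigr => s2 _.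
rewrite /bR; case: ifP => _; rewrite ?mul0r // mul1r /Y5 /Z /joinp /=.
rewrite ?(@joinf_inordL _ 4 4 _ _ 0) ?(@joinf_inordL _ 4 4 _ _ 1) ?(@joinf_inordL _ 4 4 _ _ 2)
        ?(@joinf_inordL _ 4 4 _ _ 3) ?(@joinf_inordL _ 4 4 _ _ 4) //.
rewrite ?(@joinf_inordR _ 4 3 _ _ 5) ?(@joinf_inordR _ 4 3 _ _ 6) ?(@joinf_inordR _ 4 3 _ _ 7)
        ?(@joinf_inordR _ 4 3 _ _ 8) //.
rewrite ?(@joinf_inordL _ 0 4 _ _ 0) ?(@joinf_inordR _ 0 3 _ _ 1) ?(@joinf_inordR _ 0 3 _ _ 2)
        ?(@joinf_inordR _ 0 3 _ _ 3) ?(@joinf_inordR _ 0 3 _ _ 4) //.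
by rewrite !mulrA.
Qed.

Lemma norm_yb (R : realType) b : `|yb b| = 1 :> R.
Proof. by case: b; rewrite /yb ?normrN normr1. Qed.

Lemma YY_le1 (R : realType) n (x : assignment n) q q' : Y5 R x q * Y5 R x q' <= 1.
Proof.
apply: le_trans (ler_norm _) _.
by rewrite /Y5 !normrM !norm_yb !mulr1.
Qed.

Lemma le_sum_term (R : realType) (I : finType) (F : I -> R) i :
  (forall j, 0 <= F j) -> F i <= \sum_j F j.
Proof.
move=> h; rewrite (bigD1 i) //= lerDl; apply: sumr_ge0 => j _; exact: h.
Qed.

Lemma bR_ge0 (R : realType) b : 0 <= bR b :> R. Proof. by case: b; rewrite /bR. Qed.

Lemma bad_pointwise (R : realType) n (x : assignment n) (c : params n 1) (s1 s2 : params n 4) :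
  - \sum_(a : 'I_4) \sum_(b : 'I_4) bR (s1.1 a == s2.1 b) <=
  bR (injectiveb (joinp (joinp c s1) s2).1) * (Y5 R x (joinp c s1) * Y5 R x (joinp c s2))
  - (bR (injectiveb (joinp c s1).1) * Y5 R x (joinp c s1)) *
    (bR (injectiveb (joinp c s2).1) * Y5 R x (joinp c s2)) :> R.
Proof.
have hS : 0 <= \sum_(a : 'I_4) \sum_(b : 'I_4) bR (s1.1 a == s2.1 b) :> R.
  by apply: sumr_ge0 => a _; apply: sumr_ge0 => b _; exact: bR_ge0.
have hY := @YY_le1 R n x (joinp c s1) (joinp c s2).
rewrite /joinp /=.
rewrite [injectiveb (joinf (joinf _ _) _)]inj_joinf.
case I1 : (injectiveb (joinf c.1 s1.1)) => /=; last first.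
  by rewrite /bR !mul0r subr0 oppr_le0.
have I3I2 : injectiveb s2.1 && [forall i, forall j, joinf c.1 s1.1 i != s2.1 j] ->
    injectiveb (joinf c.1 s2.1).
  case/andP => is2 /forallP h; rewrite inj_joinf is2.
  move: (I1); rewrite inj_joinf => /and3P [-> _ _] /=.
  apply/forallP => i; apply/forallP => j.
  by have /forallP := h (lshift 4 i); rewrite joinf_lshift => /(_ j).
case I2 : (injectiveb (joinf c.1 s2.1)) => /=; last first.
  rewrite /bR; case: ifP => h; first by move/I3I2: h; rewrite I2.
  by rewrite !mul0r mulr0 subr0 oppr_le0.
move: (I2); rewrite inj_joinf => /and3P [_ is2 /forallP h2].
rewrite is2 /=.
case hF : [forall i, _].
  rewrite /bR !mul1r subrr oppr_le0 //.
have [a [b e]] : exists a b, s1.1 a = s2.1 b.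
  move/negbT: hF => /forallPn [i /forallPn [j /negPn /eqP e]].
  case: (split_ordP i) e => i' -> e.
    by rewrite joinf_lshift in e; have /forallP /(_ j) := h2 i'; rewrite e eqxx.
  by rewrite joinf_rshift in e; exists i', j.
have h1 : 1 <= \sum_(a : 'I_4) \sum_(b : 'I_4) bR (s1.1 a == s2.1 b) :> R.
  have ha := @le_sum_term R _ (fun a => \sum_(b : 'I_4) bR (s1.1 a == s2.1 b)) a
    (fun a' => sumr_ge0 _ (fun b' _ => bR_ge0 _ _)).
  have hb := @le_sum_term R _ (fun b => bR (s1.1 a == s2.1 b)) b (fun b' => bR_ge0 _ _).
  apply: le_trans ha; apply: le_trans hb.
  by rewrite /= e eqxx /bR.
rewrite /bR !mul1r mul0r sub0r; lra.
Qed.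

Lemma Hc_sq (R : realType) n (x : assignment n) (c : params n 1) :
  Hc R x c ^+ 2 = \sum_(s1 : params n 4) \sum_(s2 : params n 4)
    (bR (injectiveb (joinp c s1).1) * Y5 R x (joinp c s1)) *
    (bR (injectiveb (joinp c s2).1) * Y5 R x (joinp c s2)).
Proof.
by rewrite expr2 /Hc mulr_suml; apply: eq_bigr => s1 _; rewrite mulr_sumr.
Qed.

Lemma S9_lower (R : realType) n (x : assignment n) :
  \sum_(c : params n 1) Hc R x c ^+ 2 -
  \sum_(c : params n 1) \sum_(s1 : params n 4) \sum_(s2 : params n 4)
     \sum_(a : 'I_4) \sum_(b : 'I_4) bR (s1.1 a == s2.1 b) <= S9 R x.
Proof.
rewrite S9_split -sumrB; apply: ler_sum => c _.
rewrite Hc_sq -sumrB; apply: ler_sum => s1 _.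
rewrite -sumrB; apply: ler_sum => s2 _.
have := @bad_pointwise R n x c s1 s2; lra.
Qed.

Lemma card_params n k : #|{: params n k}| = (n ^ k * 2 ^ k)%N.
Proof. by rewrite card_prod !card_ffun !card_ord card_bool. Qed.

Lemma inner_count (R : realType) n (s1 : params n 4) (a b : 'I_4) :
  \sum_(s2 : params n 4) bR (s1.1 a == s2.1 b) = (n ^ 3 * 2 ^ 4)%:R :> R.
Proof.
transitivity (\sum_(s2 : params n 4 | s2.1 b == s1.1 a) (1:R)).
  by rewrite [RHS]big_mkcond; apply: eq_bigr => s2 _; rewrite /bR eq_sym.
rewrite (sum_params_const (fun g : {ffun 'I_4 -> 'I_n} => g b == s1.1 a)).
have -> : #|(fun g : {ffun 'I_4 -> 'I_n} => g b == s1.1 a)| = (n ^ 3)%N.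
  by rewrite -(card_fix b (s1.1 a)); apply: eq_card.
by rewrite -mulr_natl mulr1.
Qed.

Lemma bad_count (R : realType) n :
  \sum_(c : params n 1) \sum_(s1 : params n 4) \sum_(s2 : params n 4)
     \sum_(a : 'I_4) \sum_(b : 'I_4) bR (s1.1 a == s2.1 b) =
  (n ^ 3 * 2 ^ 4)%:R *+ 4 *+ 4 *+ (n ^ 4 * 2 ^ 4) *+ (n ^ 1 * 2 ^ 1) :> R.
Proof.
transitivity (\sum_(c : params n 1) \sum_(s1 : params n 4) \sum_(a : 'I_4) \sum_(b : 'I_4)
   (n ^ 3 * 2 ^ 4)%:R : R).
  apply: eq_bigr => c _; apply: eq_bigr => s1 _.
  rewrite exchange_big; apply: eq_bigr => a _.
  rewrite exchange_big; apply: eq_bigr => b _.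
  exact: inner_count.
by rewrite !sumr_const !card_ord !card_params.
Qed.

Lemma S9_bound (R : realType) n (x : assignment n) : (0 < n)%N ->
  S5 R x ^+ 2 / (n ^ 1 * 2 ^ 1)%:R
  - (n ^ 3 * 2 ^ 4)%:R *+ 4 *+ 4 *+ (n ^ 4 * 2 ^ 4) *+ (n ^ 1 * 2 ^ 1) <= S9 R x.
Proof.
move=> n0.
have cs := cauchy_schwarz (Hc R x).
rewrite card_params -S5_H in cs.
have hN : 0 < (n ^ 1 * 2 ^ 1)%:R :> R by rewrite ltr0n muln_gt0 !expn_gt0 n0.
have h1 : S5 R x ^+ 2 / (n ^ 1 * 2 ^ 1)%:R <= \sum_(c : params n 1) Hc R x c ^+ 2.
  by rewrite ler_pdivrMr // mulrC.
have := @S9_lower R n x; rewrite bad_count; lra.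
Qed.

Lemma ffact_add n m l : (n ^_ (m + l) = n ^_ m * (n - m) ^_ l)%N.
Proof.
elim: l => [|l IH]; first by rewrite addn0 ffactn0 muln1.
by rewrite addnS !ffactnSr IH -mulnA subnDA.
Qed.

Lemma ffact_mono m n k : (m <= n)%N -> (m ^_ k <= n ^_ k)%N.
Proof.
elim: k m n => [|k IH] m n h; first by rewrite !ffactn0.
rewrite !ffactnS leq_mul // IH // -!subn1; exact: leq_sub2r.
Qed.

Lemma num_bound (R : realType) : 1 / 2 <= (15 / 16 : R) ^+ 9.
Proof. rewrite !exprS expr0. lra. Qed.

Lemma ffact9_lower (R : realType) n : (128 <= n)%N ->
  (n%:R : R) ^+ 9 / 2 <= (n ^_ 9)%:R.
Proof.
move=> hn.
have y0 : (0 : R) <= n%:R by rewrite ler0n.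
rewrite ffact_prod natr_prod.
have h : \prod_(i < 9) (15 / 16 * n%:R) <= \prod_(i < 9) ((n - i)%:R : R).
  apply: ler_prod => i _; apply/andP; split.
    apply: mulr_ge0 => //; lra.
  have hi : (i <= n)%N by apply: leq_trans (ltnW (ltn_ord i)) _; apply: leq_trans _ hn.
  have hi8 : (i%:R : R) <= 8 by rewrite ler_nat -ltnS ltn_ord.
  have hn' : (128 : R) <= n%:R by rewrite ler_nat.
  rewrite natrB //; lra.
apply: le_trans h; rewrite prodr_const card_ord exprMn.
have := num_bound R.
have : 0 <= (n%:R : R) ^+ 9 by rewrite exprn_ge0.
nra.
Qed.

Lemma N5sq n : (n * (n ^_ 9) <= n ^_ 5 * n ^_ 5)%N.
Proof.
rewrite -[9%N]/(5 + 4)%N ffact_add mulnCA; apply: leq_mul => //.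
rewrite (ffactnS n 4) leq_mul // ffact_mono //.
by rewrite -subn1 leq_sub2l.
Qed.

Lemma sum_C3 (R : realType) n (x : assignment n) (c : R) :
  \sum_(p in C3 n | satisfied x (clause3 p)) c =
  c * \sum_(p : params n 6 | injectiveb p.1) bR (satisfied x (clause3 p)).
Proof.
rewrite mulr_sumr big_mkcond [RHS]big_mkcond; apply: eq_bigr => p _.
rewrite /C3 inE /bR; case: (injectiveb p.1); case: (satisfied _ _);
  by rewrite ?mulr1 ?mulr0.
Qed.

Lemma sum_C5 (R : realType) n (x : assignment n) (c : R) :
  \sum_(p in C5 n | satisfied x (clause5 p)) c =
  c * \sum_(p : params n 12 | injectiveb p.1) bR (satisfied x (clause5 p)).
Proof.
rewrite mulr_sumr big_mkcond [RHS]big_mkcond; apply: eq_bigr => p _.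
rewrite /C5 inE /bR; case: (injectiveb p.1); case: (satisfied _ _);
  by rewrite ?mulr1 ?mulr0.
Qed.

Lemma card_C3 (R : realType) n : (#|C3 n|%:R : R) = (n ^_ 6 * 2 ^ 6)%:R.
Proof.
rewrite -sum_inj1 sumr_const; congr (_ *+ _); apply: eq_card => p.
by rewrite /C3 !inE.
Qed.

Lemma card_C5 (R : realType) n : (#|C5 n|%:R : R) = (n ^_ 12 * 2 ^ 12)%:R.
Proof.
rewrite -sum_inj1 sumr_const; congr (_ *+ _); apply: eq_card => p.
by rewrite /C5 !inE.
Qed.

Lemma key_alg (R : realType) (a : R) :
  (1 - 3 / Num.sqrt 21) * (3 + 3 * a) / 4 + 3 / Num.sqrt 21 * (15 - 6 * a - a ^+ 2) / 16
  <= 3 * (Num.sqrt 21 - 4) / 2.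
Proof.
set r := Num.sqrt 21.
have r2 : r ^+ 2 = 21 by rewrite /r sqr_sqrtr.
have r0 : 0 < r by rewrite /r sqrtr_gt0.
have e : 3 * (r - 4) / 2 - ((1 - 3 / r) * (3 + 3 * a) / 4 + 3 / r * (15 - 6 * a - a ^+ 2) / 16)
   = (3 * (a + 9 - 2 * r) ^+ 2 + 12 * (r ^+ 2 - 21)) / (16 * r).
  by field; rewrite gt_eqF.
rewrite -subr_ge0 e r2 subrr mulr0 addr0.
apply: divr_ge0; last lra.
apply: mulr_ge0 => //; exact: sqr_ge0.
Qed.

Unset Implicit Arguments.
Set Strict Implicit.

Theorem mainTheorem7 (R : realType) :
  exists C : R, 0 < C /\
  exists n0 : nat, forall n : nat, (n0 <= n)%N ->
    forall x : assignment n,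
      (forall v : vec n, inV v -> x (negv v) = ~~ x v) ->
      satWeight R x <= 3 * (Num.sqrt 21 - 4) / 2 + C / n%:R.
Proof.
exists 2; split; first lra.
exists 128%N => n hn x hx.
have n0 : (0 < n)%N by apply: leq_trans hn.
rewrite /satWeight sum_C3 sum_C5 (@C3_sum R n x hx) (@C5_sum R n x hx) card_C3 card_C5.
set S := S5 R x; set T := S9 R x.
set y : R := n%:R.
have y0 : 0 < y by rewrite /y ltr0n.
set N5 : R := (n ^_ 5 * 2 ^ 5)%:R.
set N9 : R := (n ^_ 9 * 2 ^ 9)%:R.
set c6 : R := ((n - 5) ^_ 1 * 2 ^ 1)%:R.
set c12 : R := ((n - 5) ^_ 7 * 2 ^ 7)%:R.
set c93 : R := ((n - 9) ^_ 3 * 2 ^ 3)%:R.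
have pos k : (k <= n)%N -> 0 < (n ^_ k * 2 ^ k)%:R :> R.
  by move=> hk; rewrite ltr0n muln_gt0 ffact_gt0 hk expn_gt0.
have N5p : 0 < N5 by apply: pos; apply: leq_trans hn.
have N9p : 0 < N9 by apply: pos; apply: leq_trans hn.
have c6p : 0 < c6 by rewrite /c6 ltr0n muln_gt0 ffact_gt0 expn_gt0 /=; lia.
have c12p : 0 < c12 by rewrite /c12 ltr0n muln_gt0 ffact_gt0 expn_gt0 /=; lia.
have c93p : 0 < c93 by rewrite /c93 ltr0n muln_gt0 ffact_gt0 expn_gt0 /=; lia.
have e6 : (n ^_ 6 * 2 ^ 6)%:R = c6 * N5 :> R.
  rewrite /c6 /N5 -natrM; congr (_ %:R).
  rewrite -[6%N]/(5 + 1)%N ffact_add; lia.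
have e12a : (n ^_ 12 * 2 ^ 12)%:R = c12 * N5 :> R.
  rewrite /c12 /N5 -natrM; congr (_ %:R).
  rewrite -[12%N]/(5 + 7)%N ffact_add expnD; lia.
have e12b : (n ^_ 12 * 2 ^ 12)%:R = c93 * N9 :> R.
  rewrite /c93 /N9 -natrM; congr (_ %:R).
  rewrite -[12%N]/(9 + 3)%N ffact_add expnD; lia.
set a := S / N5.
set A := T / N9.
have Sa : S = a * N5 by rewrite /a divfK // lt0r_neq0.
have TA : T = A * N9 by rewrite /A divfK // lt0r_neq0.
set N6 : R := (n ^_ 6 * 2 ^ 6)%:R.
set N12 : R := (n ^_ 12 * 2 ^ 12)%:R.
have N6p : 0 < N6 by rewrite /N6 e6 mulr_gt0.
have N12p : 0 < N12 by rewrite /N12 e12a mulr_gt0.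
have f0 : c6 * S = a * N6 by rewrite Sa /N6 e6; ring.
have f1 : c12 * S = a * N12 by rewrite Sa /N12 e12a; ring.
have f2 : c93 * T = A * N12 by rewrite TA /N12 e12b; ring.
clearbody N6 N12.
have t1 : @w3 R / N6 * ((3 * N6 + 3 * c6 * S) / 4) = w3 * (3 + 3 * a) / 4.
  by rewrite -[3 * c6 * S]mulrA f0; field; rewrite lt0r_neq0.
have t2 : @w5 R / N12 * (N12 - (N12 + 6 * (c12 * S) + c93 * T) / 16)
     = w5 * (1 - (1 + 6 * a + A) / 16).
  by rewrite f1 f2; field; rewrite lt0r_neq0.
rewrite t1 t2.
have hb := @S9_bound R n x n0.
have badE : (n ^ 3 * 2 ^ 4)%:R *+ 4 *+ 4 *+ (n ^ 4 * 2 ^ 4) *+ (n ^ 1 * 2 ^ 1)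
    = 8192 * y ^+ 8 :> R.
  by rewrite -!mulrnA !natrM !natrX /y; ring.
have n2E : (n ^ 1 * 2 ^ 1)%:R = 2 * y :> R by rewrite natrM !natrX /y; ring.
rewrite badE n2E -/S -/T in hb.
have P9 := @ffact9_lower R n hn.
have N9E : N9 = (n ^_ 9)%:R * 512 by rewrite /N9 natrM natrX.
have N5E : N5 = (n ^_ 5)%:R * 32 by rewrite /N5 natrM natrX.
have k0 : y * (n ^_ 9)%:R <= (n ^_ 5)%:R ^+ 2 :> R.
  by rewrite /y expr2 -!natrM ler_nat N5sq.
have k1 : a ^+ 2 * N9 * (2 * y) <= a ^+ 2 * N5 ^+ 2.
  rewrite -mulrA; apply: ler_wpM2l; first exact: sqr_ge0.
  rewrite N9E N5E; lra.
have k2 : 256 * y ^+ 9 <= N9 by rewrite N9E; rewrite -/y in P9; lra.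
have k3 : a ^+ 2 * N9 <= a ^+ 2 * N5 ^+ 2 / (2 * y).
  by rewrite ler_pdivlMr ?mulr_gt0.
have k4 : 8192 * y ^+ 8 <= 32 * N9 / y.
  rewrite ler_pdivlMr // -mulrA -exprSr; lra.
have hA : a ^+ 2 - 32 / y <= A.
  rewrite -(ler_pM2r N9p) -TA mulrBl.
  have -> : 32 / y * N9 = 32 * N9 / y by rewrite mulrAC.
  move: hb; rewrite Sa exprMn.
  have -> : a ^+ 2 * N5 ^+ 2 / (2 * y) = a ^+ 2 * N5 ^+ 2 / (2 * y) by [].
  lra.
have w50 : 0 <= @w5 R by rewrite /w5 divr_ge0 // sqrtr_ge0.
have w51 : @w5 R <= 1.
  rewrite /w5 ler_pdivrMr ?sqrtr_gt0 // mul1r.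
  have r2 : Num.sqrt 21 ^+ 2 = 21 :> R by rewrite sqr_sqrtr.
  have r0 : 0 <= Num.sqrt 21 :> R by rewrite sqrtr_ge0.
  nra.
have hk := @key_alg R a.
have h5 : w5 * (a ^+ 2 - 32 / y) <= w5 * A by apply: ler_wpM2l.
have hy : w5 * (32 / y) <= 32 / y.
  have : 0 <= 32 / y by rewrite divr_ge0 // ltW.
  nra.
move: h5 hy; rewrite /w3 /w5 => h5 hy.
lra.
Qed.
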